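(* Let $\mathbf{A}\in\mathbb{R}^{N\times N}$, $\mathbf{B}\in\mathbb{R}^{N\times m}$, $\mathbf{C}\in\mathbb{R}^{n\times N}$ define the discrete-time system $\mathbf{x}_k=\mathbf{A}\mathbf{x}_{k-1}+\mathbf{B}\mathbf{u}_k$, $\mathbf{y}_k=\mathbf{C}\mathbf{x}_k$, and let $0<s\le m$ be an integer. If the system is output $s$-sparse controllable, then $$\operatorname{rank}(\mathbf{C}\mathbf{W})=n\quad\text{and}\quad \max_{0\le i\le N-1}\frac{\sum_{j=0}^{i}R_j}{i+1}\le s.$$ Conversely, if $$\operatorname{rank}(\mathbf{C}\mathbf{W})=n\quad\text{and}\quad \min\Big\{m,\ \max_{0\le i\le N-1}R_i\Big\}\le s,$$ then the system is output $s$-sparse controllable.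
   Context: A vector in $\mathbb{R}^m$ is $s$-sparse if at most $s$ of its entries are nonzero. The system $(\mathbf{A},\mathbf{B},\mathbf{C})$ with $\mathbf{x}_k=\mathbf{A}\mathbf{x}_{k-1}+\mathbf{B}\mathbf{u}_k$, $\mathbf{y}_k=\mathbf{C}\mathbf{x}_k$ is called output $s$-sparse controllable if there exists an integer $0<K<\infty$ such that for every initial state $\mathbf{x}_0\in\mathbb{R}^N$ and every target $\mathbf{y}_f\in\mathbb{R}^n$ there exist $s$-sparse inputs $\mathbf{u}_1,\dots,\mathbf{u}_K\in\mathbb{R}^m$ with $\mathbf{y}_K=\mathbf{C}\sum_{k=1}^K\mathbf{A}^{K-k}\mathbf{B}\mathbf{u}_k+\mathbf{C}\mathbf{A}^K\mathbf{x}_0=\mathbf{y}_f$ (the supports of the $\mathbf{u}_k$ may differ across $k$). The controllability matrix is $\mathbf{W}=[\mathbf{A}^{N-1}\mathbf{B}\ \ \mathbf{A}^{N-2}\mathbf{B}\ \cdots\ \mathbf{B}]\in\mathbb{R}^{N\times Nm}$, and for integers $i\ge 0$, $R_i=\operatorname{rank}(\mathbf{C}\mathbf{A}^i\mathbf{W})-\operatorname{rank}(\mathbf{C}\mathbf{A}^{i+1}\mathbf{W})$. *)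

(* Defs.v *)
From HB Require Import structures.
From mathcomp Require Import all_boot all_order all_algebra.
From mathcomp Require Import reals.
Set Implicit Arguments. Unset Strict Implicit. Unset Printing Implicit Defensive.
Import Order.TTheory GRing.Theory Num.Theory.
Local Open Scope ring_scope.

Definition sparse {R : realType} {m : nat} (s : nat) (v : 'cV[R]_m) : bool :=
  (#|[set j : 'I_m | v j ord0 != 0%R]| <= s)%N.

(* Controllability matrix W = [A^(N-1) B, A^(N-2) B, ..., B] in R^(N x N m).
   Column index k (0 <= k < N m) lies in block k %/ m, column k %% m of it. *)
Lemma ord_modn_lt (N m : nat) (k : 'I_(N * m)) : (k %% m < m)%N.
Proof.
case: m k => [|m] k; last by rewrite ltn_mod.
have := ltn_ord k; move: (nat_of_ord k) => j; by rewrite muln0.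
Qed.

Definition ctrb_mx {R : realType} {N m : nat}
  (A : 'M[R]_N) (B : 'M[R]_(N, m)) : 'M[R]_(N, N * m) :=
  \matrix_(r < N, k < N * m)
     ((A ^+ (N.-1 - (k %/ m)) *m B) r (Ordinal (ord_modn_lt k))).

Definition Rdiff {R : realType} {N m n : nat}
  (A : 'M[R]_N) (B : 'M[R]_(N, m)) (C : 'M[R]_(n, N)) (i : nat) : int :=
  (\rank (C *m A ^+ i *m ctrb_mx A B))%:Z
  - (\rank (C *m A ^+ i.+1 *m ctrb_mx A B))%:Z.

(* Output s-sparse controllability of x_k = A x_{k-1} + B u_k, y_k = C x_k:
   there is 0 < K such that every x0, yf can be steered with s-sparse
   u_1..u_K (here u k' corresponds to u_{k'+1}, k' < K). *)
Definition output_sparse_controllable {R : realType} {N m n : nat}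
  (A : 'M[R]_N) (B : 'M[R]_(N, m)) (C : 'M[R]_(n, N)) (s : nat) : Prop :=
  exists K : nat, (0 < K)%N /\
    forall (x0 : 'cV[R]_N) (yf : 'cV[R]_n),
    exists u : 'I_K -> 'cV[R]_m,
      (forall k, sparse s (u k)) /\
      C *m (\sum_(k < K) A ^+ (K.-1 - k) *m B *m u k) + C *m A ^+ K *m x0 = yf.

(* Main.v *)
Require Import Defs.
From HB Require Import structures.
From mathcomp Require Import all_boot all_order all_algebra.
From mathcomp Require Import reals.
From mathcomp Require Import zify.
Import Order.TTheory GRing.Theory Num.Theory.
Local Open Scope ring_scope.
Set Implicit Arguments. Unset Strict Implicit. Unset Printing Implicit Defensive.

Section Cover.
Variable R : realType.

Lemma cover n (F : finType) (P : pred F) (U : F -> 'M[R]_n) :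
  (forall z : 'rV[R]_n, exists f, P f /\ (z <= U f)%MS) ->
  exists f, P f /\ row_full (U f).
Proof.
move=> HU.
case: (boolP [exists f, P f && row_full (U f)]) => [/existsP [f /andP[Pf Hf]]|/existsPn Hn].
  by exists f.
exfalso.
set M := (#|F| * n).+1.
pose x (k : nat) : 'rV[R]_n := \row_i ((k%:R : R) ^+ i).
pose Tf f := [set k : 'I_M | (x k <= U f)%MS].
have Hcard : forall f, P f -> (#|Tf f| < n)%N.
  move=> f Pf; have Hnf := Hn f; rewrite Pf /= in Hnf.
  have Hc : cokermx (U f) != 0 by rewrite cokermx_eq0.
  have [i [j Hij]] : exists i j, cokermx (U f) i j != 0.
    case: (boolP [exists i, exists j, cokermx (U f) i j != 0]) =>
      [/existsP [i /existsP [j Hij]] | /existsPn H]; first by exists i, j.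
    case/negP: Hc; apply/eqP/matrixP => i j; rewrite [RHS]mxE.
    by move: (H i) => /existsPn /(_ j); rewrite negbK => /eqP.
  pose q := \poly_(i0 < n) cokermx (U f) (insubd i i0) j.
  have Hq0 : q != 0.
    apply/eqP => H; move: Hij.
    have -> : cokermx (U f) i j = q`_i by rewrite coef_poly ltn_ord valKd.
    by rewrite H coef0 eqxx.
  have Hroots : all (root q) [seq (val k)%:R : R | k <- enum (Tf f)].
    apply/allP => y /mapP [k Hk ->]; rewrite mem_enum inE in Hk.
    rewrite /root horner_poly.
    move: Hk; rewrite submxE => /eqP /matrixP /(_ 0 j) Hk0.
    rewrite [X in X == _](_ : _ = (x k *m cokermx (U f)) 0 j); first by rewrite Hk0 mxE.
    rewrite [(x k *m _) 0 j]mxE; apply: eq_bigr => i0 _.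
    by rewrite [x k 0 i0]mxE valKd mulrC.
  have Huniq : uniq [seq (val k)%:R : R | k <- enum (Tf f)].
    rewrite map_inj_uniq ?enum_uniq // => k1 k2 /eqP; rewrite eqr_nat => /eqP.
    exact: val_inj.
  have := max_poly_roots Hq0 Hroots Huniq; rewrite size_map -cardE.
  move=> H; apply: leq_trans H _; exact: size_poly.
have H1 : (M <= \sum_(f | P f) #|Tf f|)%N.
  apply: (@leq_trans (\sum_(k < M) 1)%N); first by rewrite sum1_card card_ord.
  have -> : (\sum_(f | P f) #|Tf f| = \sum_(f | P f) \sum_(k < M) (k \in Tf f))%N.
    apply: eq_bigr => f _; rewrite -sum1_card big_mkcond /=.
    by apply: eq_bigr => k _; case: (k \in Tf f).
  rewrite exchange_big /=; apply: leq_sum => k _.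
  have [f [Pf Hf]] := HU (x k).
  by rewrite (bigD1 f) //= inE Hf.
have H2 : (\sum_(f | P f) #|Tf f| <= #|F| * n)%N.
  apply: leq_trans (_ : \sum_(f | P f) n <= _)%N.
    by apply: leq_sum => f Pf; apply: ltnW; apply: Hcard.
  by rewrite sum_nat_const leq_mul2r max_card orbT.
by have := leq_trans H1 H2; rewrite ltnn.
Qed.

End Cover.

Section Aux.
Variable R : realType.

Lemma ch_comb N (A : 'M[R]_N) (t : nat) :
  exists c : 'I_N -> R, A ^+ t = \sum_(i < N) c i *: A ^+ i.
Proof.
case: N A => [|N'] A.
  by exists (fun _ => 0); rewrite [LHS]flatmx0 [RHS]flatmx0.
set q := 'X^t %% char_poly A.
have Hcp : char_poly A != 0.
  by rewrite -size_poly_eq0 size_char_poly.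
have Hq : (size q <= N'.+1)%N.
  by have := ltn_modpN0 ('X^t) Hcp; rewrite size_char_poly.
exists (fun i => q`_i).
have -> : A ^+ t = horner_mx A q.
  rewrite /q.
  have H := divp_eq ('X^t) (char_poly A).
  transitivity (horner_mx A ('X^t)); first by rewrite rmorphXn /= horner_mx_X.
  by rewrite {1}H rmorphD rmorphM /= Cayley_Hamilton mulr0 add0r.
have Hqp : q = \poly_(i < N'.+1) q`_i.
  apply/polyP => i; rewrite coef_poly; case: ltnP => // Hi.
  by rewrite nth_default // (leq_trans Hq Hi).
rewrite {1}Hqp poly_def rmorph_sum /=; apply: eq_bigr => i _.
rewrite linearZ /= rmorphXn /= horner_mx_X.
by [].
Qed.


Variables (N m n : nat) (A : 'M[R]_N) (B : 'M[R]_(N, m)) (C : 'M[R]_(n, N)).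

Lemma ch_sub p (X : 'M[R]_(p, N)) t :
  ((X *m A ^+ t *m B)^T <= \sum_(i < N) <<(X *m A ^+ i *m B)^T>>)%MS.
Proof.
have [c ->] := ch_comb A t.
rewrite mulmx_sumr mulmx_suml linear_sum /=.
apply: summx_sub => i _.
rewrite -scalemxAr -scalemxAl linearZ /=.
apply: scalemx_sub; by rewrite (sumsmx_sup i) // genmxE.
Qed.

Lemma ctrb_entry p (X : 'M[R]_(p, N)) j (k : 'I_(N * m)) :
  (X *m ctrb_mx A B) j k =
  (X *m A ^+ (N.-1 - k %/ m) *m B) j (Ordinal (ord_modn_lt k)).
Proof.
by rewrite -[in RHS]mulmxA !mxE; apply: eq_bigr => r _; rewrite !mxE.
Qed.

Lemma ctrb_eq p (X : 'M[R]_(p, N)) :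
  ((X *m ctrb_mx A B)^T == \sum_(t < N) <<(X *m A ^+ t *m B)^T>>)%MS.
Proof.
apply/andP; split.
  apply/row_subP => k.
  have HN : (0 < N)%N.
    case: N A B C X k => [|N'] // _ _ _ _ [k]; by rewrite mul0n.
  have He : (N.-1 - k %/ m < N)%N.
    by rewrite (leq_ltn_trans (leq_subr _ _)) // prednK.
  rewrite (sumsmx_sup (Ordinal He)) // genmxE.
  have -> : row k (X *m ctrb_mx A B)^T = row (Ordinal (ord_modn_lt k))
      (X *m A ^+ (N.-1 - k %/ m) *m B)^T.
    by apply/rowP => j; rewrite [LHS]mxE [LHS]mxE ctrb_entry [RHS]mxE [RHS]mxE.
  exact: row_sub.
apply/sumsmx_subP => t _; rewrite genmxE; apply/row_subP => l.
have Hm : (0 < m)%N by apply: (leq_ltn_trans (leq0n l)).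
have Hk : ((N.-1 - t) * m + l < N * m)%N.
  rewrite (leq_trans (_ : _ < (N.-1 - t) * m + m)%N) ?ltn_add2l //.
  rewrite -mulSnr leq_mul2r; apply/orP; right.
  case: N A B C X t => [|N'] _ _ _ _ [t /= Ht] //; by rewrite ltnS leq_subr.
have -> : row l (X *m A ^+ t *m B)^T = row (Ordinal Hk) (X *m ctrb_mx A B)^T.
  apply/rowP => j; rewrite [LHS]mxE [LHS]mxE [RHS]mxE [RHS]mxE ctrb_entry /=.
  have Hdiv : (((N.-1 - t) * m + l) %/ m = N.-1 - t)%N.
    by rewrite divnMDl // divn_small // addn0.
  have -> : Ordinal (ord_modn_lt (Ordinal Hk)) = l.
    by apply: val_inj; rewrite /= modnMDl modn_small.
  rewrite /= Hdiv subKn //.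
  case: N A B C X t Hk Hdiv => [|N'] // _ _ _ _ [t /= Ht]; by [].
exact: row_sub.
Qed.


Definition mj j := (C *m A ^+ j *m B)^T.
Definition Vs i := (C *m A ^+ i *m ctrb_mx A B)^T.

Lemma mjE i t : (C *m A ^+ i *m A ^+ t *m B)^T = mj (i + t).
Proof. by rewrite /mj exprD -[A ^+ i * _]/(A ^+ i *m A ^+ t) mulmxA. Qed.

Lemma Vs_sum i : (Vs i :=: \sum_(t < N) <<mj (i + t)>>)%MS.
Proof.
apply/eqmxP; rewrite /Vs.
have E : (\sum_(t < N) <<mj (i + t)>> =
    \sum_(t < N) <<(C *m A ^+ i *m A ^+ t *m B)^T>>)%MS.
  by apply: eq_bigr => t _; rewrite mjE.
rewrite E; exact: ctrb_eq.
Qed.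

Lemma mj_sub i j : (i <= j)%N -> (mj j <= Vs i)%MS.
Proof.
move=> Hij; rewrite -(subnKC Hij) -mjE.
apply: (submx_trans (ch_sub _ _)).
by move: (ctrb_eq (C *m A ^+ i)) => /andP[_].
Qed.

Lemma Vs_eq i : (Vs i == mj i + Vs i.+1)%MS.
Proof.
apply/andP; split.
  rewrite Vs_sum; apply/sumsmx_subP => t _; rewrite genmxE.
  case: t => [[|t]] Ht /=.
    by rewrite addn0 addsmxSl.
  apply: submx_trans (addsmxSr _ _); apply: mj_sub; by rewrite addnS ltnS leq_addr.
rewrite addsmx_sub mj_sub //= Vs_sum; apply/sumsmx_subP => t _; rewrite genmxE.
apply: mj_sub; exact: (leq_trans (leqnSn i) (leq_addr _ _)).
Qed.


Definition G i := (A ^+ i *m ctrb_mx A B)^T.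

Lemma G_dec i : (G i.+1 <= G i)%MS.
Proof.
move: (ctrb_eq (A ^+ i.+1)) => /andP[H _]; apply: (submx_trans H).
apply/sumsmx_subP => t _; rewrite genmxE.
have -> : A ^+ i.+1 *m A ^+ t = A ^+ i *m A ^+ t.+1.
  by rewrite -[LHS]/(A ^+ i.+1 * A ^+ t) -[RHS]/(A ^+ i * A ^+ t.+1) -!exprD addSnnS.
apply: (submx_trans (ch_sub _ _)).
by move: (ctrb_eq (A ^+ i)) => /andP[_].
Qed.

Lemma G_mul i : G i.+1 = G i *m A^T.
Proof. by rewrite /G exprS -[A * _]/(A *m A ^+ i) -mulmxA trmx_mul. Qed.

Lemma G_stab J : (N <= J)%N -> (G N <= G J)%MS.
Proof.
have key : forall i, (\rank (G i) + i <= N)%N \/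
                     exists2 i0, (i0 <= i)%N & (G i0 <= G i0.+1)%MS.
  elim => [|i [IH|[i0 Hi0 Hs]]].
  - by left; rewrite addn0 rank_leq_col.
  - have [Hs|Hns] := boolP (G i <= G i.+1)%MS; first by right; exists i.
    left; apply: leq_trans IH; rewrite addnS -addSn leq_add2r.
    by apply: rank_ltmx; rewrite ltmxE G_dec.
  - by right; exists i0 => //; apply: leqW.
have prop : forall i0, (G i0 <= G i0.+1)%MS -> forall k, (G (i0 + k) <= G (i0 + k).+1)%MS.
  move=> i0 Hs; elim => [|k IH]; first by rewrite addn0.
  by rewrite addnS [X in (_ <= X)%MS]G_mul [X in (X <= _)%MS]G_mul submxMr.
move=> HNJ; rewrite -(subnKC HNJ).
case: (key N) => [H|[i0 Hi0 Hs]].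
  have : \rank (G N) = 0%N by apply/eqP; rewrite -leqn0 -(leq_add2r N).
  by move/eqP; rewrite mxrank_eq0 => /eqP ->; rewrite sub0mx.
elim: (J - N)%N => [|d IH]; first by rewrite addn0.
apply: (submx_trans IH); rewrite addnS.
have := prop i0 Hs (N + d - i0)%N; rewrite subnKC //.
exact: (leq_trans Hi0 (leq_addr _ _)).
Qed.

Lemma Vs_G i : Vs i = G i *m C^T.
Proof. by rewrite /Vs /G -mulmxA trmx_mul. Qed.

Lemma Vs_stab J : (N <= J)%N -> (Vs N <= Vs J)%MS.
Proof. by move=> H; rewrite !Vs_G submxMr // G_stab. Qed.


Definition ind (S : {set 'I_m}) : 'rV[R]_m := \row_l (if l \in S then 1 else 0).
Definition Msub (S : {set 'I_m}) (M : 'M[R]_(m, n)) := diag_mx (ind S) *m M.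

Lemma row_Msub (l : 'I_m) (S : {set 'I_m}) (M : 'M[R]_(m, n)) : row l (Msub S M) = if l \in S then row l M else 0.
Proof.
apply/rowP => j; rewrite /Msub mul_diag_mx !mxE.
by case: (l \in S); rewrite ?mul1r ?mul0r ?mxE.
Qed.

Lemma row_in_Msub (l : 'I_m) (S : {set 'I_m}) (M : 'M[R]_(m, n)) : l \in S -> (row l M <= Msub S M)%MS.
Proof.
move=> Hl; have := row_sub l (Msub S M); by rewrite row_Msub Hl.
Qed.

Lemma Msub_le (S : {set 'I_m}) (M : 'M[R]_(m, n)) : (Msub S M <= M)%MS.
Proof. exact: submxMl. Qed.

Lemma Msub_mono (S1 S2 : {set 'I_m}) (M : 'M[R]_(m, n)) : S1 \subset S2 -> (Msub S1 M <= Msub S2 M)%MS.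
Proof.
move=> H; apply/row_subP => l; rewrite row_Msub.
case: ifP => Hl; last by rewrite sub0mx.
apply: row_in_Msub; exact: (subsetP H).
Qed.

Lemma Msub_setT (M : 'M[R]_(m, n)) : (M <= Msub setT M)%MS.
Proof. by apply/row_subP => l; apply: row_in_Msub; rewrite inE. Qed.

Lemma Msub_rank (S : {set 'I_m}) (M : 'M[R]_(m, n)) : (\rank (Msub S M) <= #|S|)%N.
Proof.
case: (pickP (mem S)) => [x0 Hx0|S0]; last first.
  have -> : Msub S M = 0.
    apply/row_matrixP => l; rewrite row_Msub row0.
    by have := S0 l; rewrite /= => ->.
  by rewrite mxrank0.
apply: leq_trans (rank_leq_row (rowsub (@enum_val _ (mem S)) M)).
apply: mxrankS; apply/row_subP => l; rewrite row_Msub.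
case: ifP => Hl; last by rewrite sub0mx.
rewrite -(enum_rankK_in Hx0 Hl) -row_rowsub; exact: row_sub.
Qed.


Lemma lt_add p q (Y : 'M[R]_(p, n)) (X : 'M[R]_(q, n)) :
  ~~ (X <= Y)%MS -> (\rank Y < \rank (Y + X)%MS)%N.
Proof.
move=> H; apply: rank_ltmx; rewrite ltmxE addsmxSl /=.
apply: contra H => H; exact: submx_trans (addsmxSr _ _) H.
Qed.

Lemma select (M : 'M[R]_(m, n)) d p (Y : 'M[R]_(p, n)) :
  (\rank (Y + M)%MS - \rank Y <= d)%N ->
  exists S : {set 'I_m}, (#|S| <= \rank (Y + M)%MS - \rank Y)%N /\
                         (M <= Y + Msub S M)%MS.
Proof.
elim: d p Y => [|d IH] p Y Hd; (case: (boolP (M <= Y)%MS) => HMY;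
  first by exists set0; rewrite cards0 leq0n; split => //;
           exact: submx_trans HMY (addsmxSl _ _)).
  have := lt_add HMY; lia.
have [l Hl] : exists l, ~~ (row l M <= Y)%MS by apply/row_subPn.
set Y' := (Y + row l M)%MS.
have HY' := lt_add Hl.
have E : (Y' + M :=: Y + M)%MS.
  apply/eqmxP/andP; split.
    rewrite !addsmx_sub addsmxSl addsmxSr /=.
    rewrite andbT; exact: submx_trans (row_sub l M) (addsmxSr _ _).
  rewrite !addsmx_sub addsmxSr /= andbT.
  exact: submx_trans (addsmxSl _ _) (addsmxSl _ _).
have HY'M : (\rank Y' <= \rank (Y' + M)%MS)%N by apply: mxrankS; apply: addsmxSl.
rewrite E in HY'M.
have [S' [HS'1 HS'2]] := IH _ Y' (ltac:(rewrite E; rewrite -/Y' in HY'; lia)).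
exists (l |: S'); split.
  rewrite cardsU1; rewrite E in HS'1; rewrite -/Y' in HY'.
  apply: leq_trans (leq_add (leq_b1 _) (leqnn _)) _; lia.
apply: (submx_trans HS'2); rewrite !addsmx_sub addsmxSl /=.
apply/andP; split.
  apply: submx_trans (addsmxSr _ _); apply: row_in_Msub; exact: setU11.
apply: submx_trans (addsmxSr _ _); apply: Msub_mono; exact: subsetUr.
Qed.


Definition Sp (T : nat) (S : nat -> {set 'I_m}) : 'M[R]_n :=
  (\sum_(j < T) <<Msub (S j) (mj j)>>)%MS.

Lemma Sp_sup T S j : (j < T)%N -> (Msub (S j) (mj j) <= Sp T S)%MS.
Proof. by move=> H; rewrite /Sp (sumsmx_sup (Ordinal H)) // genmxE. Qed.

Lemma Sp_mono T (S1 S2 : nat -> {set 'I_m}) : (forall j, (j < T)%N -> S1 j \subset S2 j) ->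
  (Sp T S1 <= Sp T S2)%MS.
Proof.
move=> H; apply/sumsmx_subP => j _; rewrite genmxE.
apply: submx_trans (Sp_sup _ (ltn_ord j)); apply: Msub_mono; exact: H.
Qed.

Lemma Sp_T T1 T2 S : (T1 <= T2)%N -> (Sp T1 S <= Sp T2 S)%MS.
Proof.
move=> H; apply/sumsmx_subP => j _; rewrite genmxE.
apply: Sp_sup; exact: leq_trans (ltn_ord j) H.
Qed.

Lemma reach s T (S : nat -> {set 'I_m}) : (forall j, #|S j| <= s)%N -> (1%:M <= Sp T S)%MS ->
  output_sparse_controllable A B C s.
Proof.
move=> HS Hfull; exists T.+1; split => // x0 yf.
set z := (yf - C *m A ^+ T.+1 *m x0)^T.
have : (z <= Sp T S)%MS by exact: submx_trans (submx1 z) Hfull.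
move/sub_sums_genmxP => [w hz].
pose v' (j : nat) : 'cV[R]_m :=
  if @insub _ (fun j => j < T)%N 'I_T j is Some i
  then (w i *m diag_mx (ind (S i)))^T else 0.
exists (fun k : 'I_T.+1 => v' (T - k)%N); split.
  move=> k; rewrite /sparse /v'.
  case: insubP => [i _ Hi|_]; last first.
    apply: leq_trans (_ : #|(set0 : {set 'I_m})| <= s)%N; last by rewrite cards0.
    by apply: subset_leq_card; apply/subsetP => l; rewrite !inE !mxE eqxx.
  apply: leq_trans (HS i); apply: subset_leq_card; apply/subsetP => l.
  rewrite !inE mxE mul_mx_diag !mxE.
  by case: (l \in S i); rewrite ?eqxx // mulr0 eqxx.
suff -> : C *m (\sum_(k < T.+1) A ^+ (T.+1.-1 - k) *m B *m v' (T - k)%N) =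
          yf - C *m A ^+ T.+1 *m x0 by rewrite subrK.
apply: trmx_inj; rewrite -/z hz mulmx_sumr linear_sum /=.
rewrite (reindex_inj rev_ord_inj) /= big_ord_recr /=.
have -> : v' (T - (T - T))%N = 0.
  by rewrite /v' subnn subn0 insubN // ltnn.
rewrite !mulmx0 trmx0 addr0; apply: eq_bigr => i _.
have -> : (T - (T - i))%N = i by rewrite subKn // ltnW.
rewrite /v' valK.
rewrite /Msub /mj !trmx_mul !trmxK; by rewrite !mulmxA.
Qed.


Lemma addsmx_mono p1 p2 p3 p4 (X1 : 'M[R]_(p1, n)) (X2 : 'M[R]_(p2, n))
  (Y1 : 'M[R]_(p3, n)) (Y2 : 'M[R]_(p4, n)) :
  (X1 <= Y1)%MS -> (X2 <= Y2)%MS -> (X1 + X2 <= Y1 + Y2)%MS.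
Proof.
move=> H1 H2; rewrite addsmx_sub.
by rewrite (submx_trans H1 (addsmxSl _ _)) (submx_trans H2 (addsmxSr _ _)).
Qed.

Lemma head b : (forall j, (j < N)%N -> (\rank (Vs j) - \rank (Vs j.+1) <= b)%N) ->
  forall k, (k <= N)%N -> exists S : nat -> {set 'I_m},
    [/\ forall j, (#|S j| <= b)%N, forall j, (j < N - k)%N -> S j = set0 &
        (Vs (N - k) <= Sp N S + Vs N)%MS].
Proof.
move=> Hb; elim => [|k IH] Hk.
  exists (fun _ => set0); split => //; first by move=> j; rewrite cards0.
  by rewrite subn0 addsmxSr.
have [S' [HS'1 HS'2 HS'3]] := IH (ltnW Hk).
set i := (N - k.+1)%N.
have Hi1 : i.+1 = (N - k)%N by rewrite /i subnSK.
have HiN : (i < N)%N by rewrite /i; lia.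
have [Si [HSi1 HSi2]] := @select (mj i) _ _ (Vs i.+1) (leqnn _).
have Erk : \rank (Vs i.+1 + mj i)%MS = \rank (Vs i).
  by rewrite addsmxC (eqmxP (Vs_eq i)).
exists (fun j => if j == i then Si else S' j); split.
- move=> j; case: eqP => _ //; rewrite (leq_trans HSi1) // Erk; exact: Hb.
- move=> j Hj; have -> : (j == i) = false by apply/negbTE; rewrite neq_ltn Hj.
  by apply: HS'2; rewrite -Hi1 ltnW.
have HSp : (Sp N S' <= Sp N (fun j => if j == i then Si else S' j))%MS.
  apply: Sp_mono => j _; case: eqP => [->|_] //.
  by rewrite HS'2 ?sub0set // -Hi1.
move: (Vs_eq i) => /andP[H _]; apply: (submx_trans H).
rewrite addsmx_sub; apply/andP; split.
  apply: (submx_trans HSi2); rewrite addsmx_sub; apply/andP; split.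
    rewrite Hi1; apply: submx_trans HS'3 _; exact: addsmx_mono HSp (submx_refl _).
  apply: submx_trans (addsmxSl _ _).
  have := Sp_sup (fun j => if j == i then Si else S' j) HiN; by rewrite eqxx.
rewrite Hi1; apply: submx_trans HS'3 _; exact: addsmx_mono HSp (submx_refl _).
Qed.


Lemma tail d : forall (X : 'M[R]_n) J, (N <= J)%N -> (n - \rank X <= d)%N ->
  exists T (S : nat -> {set 'I_m}),
    [/\ forall j, (#|S j| <= 1)%N, forall j, (j < J)%N -> S j = set0 &
        (Vs N <= X + Sp T S)%MS].
Proof.
elim: d => [|d IH] X J HJ Hd; (case: (boolP (Vs N <= X)%MS) => HX;
  first by exists 0%N, (fun _ => set0); split => //;
    [move=> j; rewrite cards0 | exact: submx_trans HX (addsmxSl _ _)]).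
  exfalso; apply: (negP HX); apply: submx_full.
  by rewrite /row_full eqn_leq rank_leq_col /=; lia.
have [t Ht] : exists t : 'I_N, ~~ (mj (J + t) <= X)%MS.
  case: (boolP [exists t : 'I_N, ~~ (mj (J + t) <= X)%MS]) => [/existsP //|/existsPn Hn].
  exfalso; apply: (negP HX); apply: submx_trans (Vs_stab HJ) _.
  rewrite Vs_sum; apply/sumsmx_subP => t _; rewrite genmxE.
  by have := Hn t; rewrite negbK.
set j0 := (J + t)%N.
have [l Hl] : exists l, ~~ (row l (mj j0) <= X)%MS by apply/row_subPn.
have Hlt := lt_add Hl.
have HJ' : (N <= j0.+1)%N by rewrite /j0; lia.
have [T' [S' [HS'1 HS'2 HS'3]]] :=
  IH (X + row l (mj j0))%MS j0.+1 HJ' (ltac:(lia)).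
set S := fun j => if j == j0 then [set l] else S' j.
exists (maxn T' j0.+1), S; split.
- by move=> j; rewrite /S; case: eqP => _; rewrite ?cards1.
- move=> j Hj; rewrite /S; case: eqP => [Hjj|_]; first by move: Hj; rewrite Hjj /j0; lia.
  by apply: HS'2; rewrite /j0; lia.
apply: (submx_trans HS'3); rewrite !addsmx_sub addsmxSl /=.
apply/andP; split.
  apply: submx_trans (addsmxSr _ _).
  have Hj0 : (j0 < maxn T' j0.+1)%N by rewrite leq_max ltnSn orbT.
  apply: submx_trans (Sp_sup S Hj0); apply: row_in_Msub; by rewrite /S eqxx set11.
apply: submx_trans (addsmxSr _ _).
apply: submx_trans (Sp_T S (leq_maxl T' j0.+1)).
apply: Sp_mono => j _; rewrite /S; case: eqP => [->|_] //.
by rewrite HS'2 ?sub0set.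
Qed.


Lemma converse s : (0 < s)%N -> \rank (C *m ctrb_mx A B) = n ->
  ((m <= s)%N \/ (forall j, (j < N)%N -> (\rank (Vs j) - \rank (Vs j.+1) <= s)%N)) ->
  output_sparse_controllable A B C s.
Proof.
move=> Hs Hrk Hcase.
have Hfull : (1%:M <= Vs 0)%MS.
  by rewrite sub1mx /row_full /Vs mxrank_tr expr0 mulmx1 Hrk.
case: Hcase => [Hms|Hb].
  apply: (@reach s N (fun _ => setT)).
    by move=> j; rewrite cardsT card_ord.
  apply: (submx_trans Hfull); rewrite Vs_sum; apply/sumsmx_subP => t _.
  rewrite genmxE add0n; apply: submx_trans (Msub_setT _) _.
  exact: (Sp_sup (fun _ => setT) (ltn_ord t)).
have [Sh [HSh1 _ HSh3]] := head Hb (leqnn N).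
rewrite subnn in HSh3.
have [T [St [HSt1 HSt2 HSt3]]] := @tail n 0 N (leqnn N) (ltac:(by rewrite mxrank0 subn0)).
set S := fun j => if (j < N)%N then Sh j else St j.
apply: (@reach s (maxn N T) S).
  move=> j; rewrite /S; case: ifP => _ //.
  exact: leq_trans (HSt1 j) Hs.
apply: (submx_trans Hfull); apply: (submx_trans HSh3); rewrite addsmx_sub.
apply/andP; split.
  apply: submx_trans (Sp_T S (leq_maxl N T)).
  by apply: Sp_mono => j Hj; rewrite /S Hj.
apply: (submx_trans HSt3); rewrite addsmx_sub sub0mx /=.
apply: submx_trans (Sp_T S (leq_maxr N T)).
apply: Sp_mono => j _; rewrite /S; case: ifP => Hj //.
by rewrite HSt2 ?sub0set.
Qed.



Lemma rank_sums (I : finType) (P : pred I) p (X : I -> 'M[R]_(p, n)) :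
  (\rank (\sum_(k | P k) <<X k>>)%MS <= \sum_(k | P k) \rank (X k))%N.
Proof.
elim/big_rec2: _ => [|k a M Pk IH]; first by rewrite mxrank0.
apply: leq_trans (mxrank_adds_leqif _ _).1 _.
by rewrite genmxE leq_add2l.
Qed.

Lemma forward s : output_sparse_controllable A B C s ->
  \rank (C *m ctrb_mx A B) = n /\
  (forall i, (i < N)%N -> (n <= s * i.+1 + \rank (Vs i.+1))%N).
Proof.
move=> [K [HK Hc]].
pose U (sg : {ffun 'I_K -> {set 'I_m}}) : 'M[R]_n :=
  (\sum_(k < K) <<Msub (sg k) (mj (K.-1 - k))>>)%MS.
pose P (sg : {ffun 'I_K -> {set 'I_m}}) := [forall k, #|sg k| <= s]%N.
have [sg [Psg Hsg]] : exists sg, P sg /\ row_full (U sg).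
  apply: cover => z.
  have [u [Hu Heq]] := Hc 0 z^T.
  rewrite mulmx0 addr0 in Heq.
  exists [ffun k => [set l | u k l 0 != 0]]; split.
    apply/forallP => k; rewrite ffunE; exact: Hu.
  apply/sub_sums_genmxP; exists (fun k => (u k)^T).
  rewrite -[z]trmxK -Heq mulmx_sumr linear_sum /=; apply: eq_bigr => k _.
  rewrite /Msub /mj ffunE [X in _ = X]mulmxA.
  have -> : (u k)^T *m diag_mx (ind [set l | u k l 0 != 0]) = (u k)^T.
    rewrite mul_mx_diag; apply/matrixP => a l; rewrite !mxE inE (ord1 a).
    by case: eqP => [->|_]; rewrite ?mulr1 ?mulr0.
  by rewrite !trmx_mul !mulmxA.
have Hsub : forall i : nat, (U sg <= \sum_(k < K | (K.-1 - k <= i)%N) <<Msub (sg k) (mj (K.-1 - k))>>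
                              + Vs i.+1)%MS.
  move=> i; apply/sumsmx_subP => k _; rewrite genmxE.
  case: (leqP (K.-1 - k) i) => Hki.
    apply: submx_trans (addsmxSl _ _); by rewrite (sumsmx_sup k) // genmxE.
  apply: submx_trans (addsmxSr _ _); apply: submx_trans (Msub_le _ _) _.
  exact: mj_sub.
have Hn : forall i, (n <= s * i.+1 + \rank (Vs i.+1))%N.
  move=> i; move: Hsg; rewrite /row_full => /eqP Hr.
  rewrite -{1}Hr; apply: leq_trans (mxrankS (Hsub i)) _.
  apply: leq_trans (mxrank_adds_leqif _ _).1 _; rewrite leq_add2r.
  apply: leq_trans (rank_sums _ _) _.
  apply: leq_trans (_ : \sum_(k < K | (K.-1 - k <= i)%N) s <= _)%N.
    apply: leq_sum => k _; apply: leq_trans (Msub_rank _ _) _.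
    by move/forallP: Psg => /(_ k).
  rewrite sum_nat_const mulnC leq_mul2l; apply/orP; right.
  set D := [pred k : 'I_K | K.-1 - k <= i]%N.
  rewrite -(@card_in_imset _ _ (fun k : 'I_K => (inord (K.-1 - k) : 'I_i.+1)) D).
    exact: leq_trans (max_card _) (eq_leq (card_ord _)).
  move=> k1 k2; rewrite !inE => H1 H2 /(congr1 val); rewrite /= !inordK //.
  move=> H; apply: val_inj => /=.
  have := ltn_ord k1; have := ltn_ord k2; lia.
split => //.
apply/eqP; rewrite eqn_leq rank_leq_row /=.
move: Hsg; rewrite /row_full => /eqP {1}<-.
have -> : \rank (C *m ctrb_mx A B) = \rank (Vs 0) by rewrite /Vs mxrank_tr expr0 mulmx1.
apply: mxrankS; apply/sumsmx_subP => k _; rewrite genmxE.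
apply: submx_trans (Msub_le _ _) _; exact: mj_sub.
Qed.

End Aux.

Theorem theorem1 (R : realType) (N m n s : nat)
  (A : 'M[R]_N) (B : 'M[R]_(N, m)) (C : 'M[R]_(n, N)) :
  (0 < s)%N -> (s <= m)%N ->
  (output_sparse_controllable A B C s ->
     \rank (C *m ctrb_mx A B) = n /\
     \big[Num.max/0]_(i < N)
        (((\sum_(j < i.+1) Rdiff A B C j)%:~R : R) / (i.+1)%:R) <= s%:R)
  /\
  ((\rank (C *m ctrb_mx A B) = n /\
    Num.min (m%:Z) (\big[Num.max/0]_(i < N) Rdiff A B C i) <= s%:Z) ->
     output_sparse_controllable A B C s).
Proof.
move=> Hs Hsm.
have rkV : forall i, \rank (Vs A B C i) = \rank (C *m A ^+ i *m ctrb_mx A B).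
  by move=> i; rewrite /Vs mxrank_tr.
split.
- move=> H; have [Hrk Hn] := @forward R N m n A B C s H; split => //.
  have tele : forall i, (\sum_(j < i) Rdiff A B C j) =
      (n%:Z - (\rank (C *m A ^+ i *m ctrb_mx A B))%:Z).
    elim => [|i IH]; first by rewrite big_ord0 expr0 mulmx1 Hrk subrr.
    by rewrite big_ord_recr /= IH /Rdiff addrA subrK.
  elim/big_ind: _ => [|x y Hx Hy|i _]; first by rewrite ler0n.
    by rewrite ge_max Hx Hy.
  rewrite tele ler_pdivrMr ?ltr0Sn // -natrM.
  rewrite -[((s * i.+1)%N)%:R]/(((s * i.+1)%N%:Z)%:~R : R) ler_int.
  have := Hn i (ltn_ord i); rewrite rkV; lia.
- move=> [Hrk Hmin]; apply: (@converse R N m n A B C s Hs Hrk).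
  move: Hmin; rewrite ge_min => /orP [Hm|Hmax]; first by left; lia.
  right => j Hj.
  have := le_bigmax 0 (fun i : 'I_N => Rdiff A B C i) (Ordinal Hj).
  move=> /(le_trans) /(_ Hmax) /=; rewrite /Rdiff -!rkV.
  have : (Vs A B C j.+1 <= Vs A B C j)%MS.
    by move: (Vs_eq A B C j) => /andP[_]; rewrite addsmx_sub => /andP[].
  move=> /mxrankS; lia.
Qed.
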